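(* Assume the setting in the context (in particular Assumption (A)). Let $\rho>0$, $z_0\in V_f(\rho)$ and $\epsilon>0$, and run Algorithm $\mathcal{A}_*$ from $z_0$ with accuracy $\epsilon$. Then: (i) the number of calls to $\mathcal{A}_d$ is finite, i.e. $j_{out}$ is finite; (ii) the number of iterations of $\mathcal{A}$ performed at each call of $\mathcal{A}_d$ satisfies $m_{j+1}\leq\lceil4\bar n_\rho\rceil$ for all $j\in\{0,\dots,j_{out}\}$; (iii) the total number $N_{\mathcal{A}}=\sum_{j=0}^{j_{out}}m_{j+1}$ of iterations of $\mathcal{A}$ performed by Algorithm $\mathcal{A}_*$ satisfies $$N_{\mathcal{A}}\leq\frac{e\lceil4\bar n_\rho\rceil}{2}\left\lceil5+\frac{1}{\ln15}\ln\left(1+\frac{f(z_0)-f^*}{\epsilon}\right)\right\rceil.$$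
   Context: Let $f:\mathbb{R}^n\to(-\infty,\infty]$ be a proper closed convex function such that the problem $f^*=\min_{x\in\mathbb{R}^n}f(x)$ is solvable. Let $\Omega_f=\{x: f(x)=f^*\}$, fix a norm $\|\cdot\|$ on $\mathbb{R}^n$ with dual norm $\|y\|_*=\sup\{y^Tz:\|z\|\leq 1\}$, and for $x\in\mathbb{R}^n$ let $\bar x=\arg\min_{z\in\Omega_f}\|x-z\|$. For $\rho\geq0$ let $V_f(\rho)=\{x: f(x)-f^*\leq\rho\}$. Let $\mathcal{A}$ be an iterative algorithm: for $x_0\in\mathrm{dom} f$ and integer $k\geq1$, $\mathcal{A}(x_0,k)$ denotes its $k$-th iterate started from $x_0$ (and $\mathcal{A}(x_0,0)=x_0$). Assumption (A): (i) for every $\rho>0$ there is $\mu_\rho>0$ with $f(x_0)-f^*\geq\frac{\mu_\rho}{2}\|x_0-\bar x_0\|^2$ for all $x_0\in V_f(\rho)$; (ii) there exist $a_f>0$, $L_f>0$ and $g:\mathbb{R}^n\to\mathbb{R}^n$ with $g(x)=0\iff x\in\Omega_f$ such that for every $x_0\in\mathrm{dom} f$: $f(\mathcal{A}(x_0,1))\leq f(x_0)-\frac{1}{2L_f}\|g(x_0)\|_*^2$ and $f(\mathcal{A}(x_0,k))-f^*\leq\frac{a_f}{(k+1)^2}\|x_0-\bar x_0\|^2$ for all $k\geq1$; (iii) $\bar n_\rho:=\max\{\frac12,\sqrt{2a_f/\mu_\rho}\}$. Procedure $\mathcal{A}_d(r,n)$ (input $r\in\mathrm{dom} f$, $n\in\mathbb{R}$):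 set $x_0=r$, $k=0$. Repeat: $k\gets k+1$; set $x_k=\mathcal{A}(x_0,k)$ if $f(\mathcal{A}(x_0,k))\leq f(x_{k-1})$, and $x_k=x_{k-1}$ otherwise; $\ell=\lfloor k/2\rfloor$; until $k\geq n$ and $f(x_\ell)-f(x_k)\leq\frac13(f(x_0)-f(x_\ell))$. Output $z=x_k$, $m=k$ (so $m$ iterations of $\mathcal{A}$ are performed). Algorithm $\mathcal{A}_*(z_0)$ (input $z_0\in\mathrm{dom} f$, $\epsilon>0$): set $m_0=1$, $m_{-1}=1$, $j=-1$. Repeat: $j\gets j+1$; $s_j=\sqrt{\frac{f(z_{j-1})-f(z_j)}{f(z_{j-2})-f(z_j)}}$ if $j\geq2$ and $s_j=0$ otherwise; $n_j=\max\{m_j,4s_jm_{j-1}\}$; $[z_{j+1},m_{j+1}]=\mathcal{A}_d(z_j,n_j)$; until $f(z_j)-f(z_{j+1})\leq\epsilon$. Output $z_{out}=z_{j+1}$, $j_{out}=j$. Here $e$ is Euler's number. *)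

(* Defs.v *)
From HB Require Import structures.
From mathcomp Require Import all_boot all_order all_algebra.
From mathcomp Require Import all_classical all_reals all_analysis.
Set Implicit Arguments. Unset Strict Implicit. Unset Printing Implicit Defensive.
Import Order.TTheory GRing.Theory Num.Theory.
Import numFieldNormedType.Exports.
Local Open Scope classical_set_scope.
Local Open Scope ring_scope.

Section Defs.
Variables (R : realType) (n : nat).
Notation vec := 'rV[R]_n.

Definition is_norm (N : vec -> R) : Prop :=
  [/\ forall x, 0 <= N x, forall x, N x = 0 -> x = 0,
      forall (a : R) x, N (a *: x) = `|a| * N x &
      forall x y, N (x + y) <= N x + N y].

Definition dotv (y z : vec) : R := \sum_(i < n) y ord0 i * z ord0 i.

Definition dual_norm (N : vec -> R) (y : vec) : R :=
  sup [set dotv y z | z in [set z | N z <= 1]].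

Definition dom (f : vec -> \bar R) : set vec := [set x | (f x < +oo)%E].

Definition proper_fun (f : vec -> \bar R) : Prop :=
  (forall x, f x != -oo%E) /\ (exists x, f x \is a fin_num).

Definition epigraph (f : vec -> \bar R) : set (vec * R) :=
  [set p | (f p.1 <= p.2%:E)%E].

(* closed = lower semicontinuous = closed epigraph *)
Definition closed_fun (f : vec -> \bar R) : Prop := closed (epigraph f).

Definition convex_fun (f : vec -> \bar R) : Prop :=
  forall x y (t : R), 0 < t < 1 ->
    (f (t *: x + (1 - t) *: y)%R <= t%:E * f x + (1 - t)%R%:E * f y)%E.

Definition fr (f : vec -> \bar R) (x : vec) : R := fine (f x).

Fixpoint Ad_x (f : vec -> \bar R) (A : vec -> nat -> vec) (r : vec) (k : nat)
  : vec :=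
  match k with
  | 0 => r
  | k'.+1 => if (f (A r k'.+1) <= f (Ad_x f A r k'))%E then A r k'.+1
             else Ad_x f A r k'
  end.

Definition Ad_stop (f : vec -> \bar R) (A : vec -> nat -> vec) (r : vec)
  (nn : R) (k : nat) : Prop :=
  nn <= k%:R /\
  (f (Ad_x f A r k./2) - f (Ad_x f A r k)
     <= (3^-1)%:E * (f (Ad_x f A r 0) - f (Ad_x f A r k./2)))%E.

Definition Ad_run (f : vec -> \bar R) (A : vec -> nat -> vec) (r : vec)
  (nn : R) (z : vec) (m : nat) : Prop :=
  [/\ (1 <= m)%N, Ad_stop f A r nn m,
      (forall k, (1 <= k < m)%N -> ~ Ad_stop f A r nn k) &
      z = Ad_x f A r m].

Definition s_coef (f : vec -> \bar R) (zs : nat -> vec) (j : nat) : R :=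
  if (2 <= j)%N then
    Num.sqrt ((fr f (zs j.-1) - fr f (zs j)) / (fr f (zs j.-2) - fr f (zs j)))
  else 0.

(* m_{j-1} with the convention m_{-1} = 1 *)
Definition m_prev (ms : nat -> nat) (j : nat) : nat :=
  if j is j'.+1 then ms j' else 1%N.

Definition n_coef (f : vec -> \bar R) (zs : nat -> vec) (ms : nat -> nat)
  (j : nat) : R :=
  Num.max (ms j)%:R (4 * s_coef f zs j * (m_prev ms j)%:R).

(* A run of A_*(z0) with accuracy eps that terminates with j_out = jout:
   zs j = z_j and ms j = m_j for 0 <= j <= jout+1. *)
Definition Astar_run (f : vec -> \bar R) (A : vec -> nat -> vec) (eps : R)
  (z0 : vec) (jout : nat) (zs : nat -> vec) (ms : nat -> nat) : Prop :=
  [/\ zs 0%N = z0, ms 0%N = 1%N,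
      (forall j, (j <= jout)%N ->
         Ad_run f A (zs j) (n_coef f zs ms j) (zs j.+1) (ms j.+1)),
      (forall j, (j < jout)%N -> ~ (f (zs j) - f (zs j.+1) <= eps%:E)%E) &
      (f (zs jout) - f (zs jout.+1) <= eps%:E)%E].

End Defs.

(* Main.v *)
Require Import Defs.
From HB Require Import structures.
From mathcomp Require Import all_boot all_order all_algebra.
From mathcomp Require Import all_classical all_reals all_analysis.
From mathcomp Require Import ring lra zify.
Import Order.TTheory GRing.Theory Num.Theory.
Import numFieldNormedType.Exports.
Lemma sum_le_const (m : nat -> nat) a b c :
  (forall i, (a <= i < b)%N -> (m i <= c)%N) ->
  (\sum_(a <= i < b) m i <= (b - a) * c)%N.
Proof.
move=> h; rewrite -sum_nat_const_nat big_nat_cond [X in (_ <= X)%N]big_nat_cond.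
by apply: leq_sum => i /andP [hi _]; apply: h.
Qed.

Lemma sum_bound (m : nat -> nat) (J T : nat) : (1 <= T)%N ->
  (forall i k, (i <= k)%N -> (m i <= m k)%N) ->
  (forall i, (1 <= i)%N -> (i + T <= J.+1)%N -> (77 * m i <= 20 * m (i + T))%N) ->
  (57 * \sum_(1 <= i < J.+2) m i <= 77 * T * m J.+1)%N.
Proof.
move=> T1 mono grow.
suff main : forall K k, (k <= K)%N -> (k <= J.+1)%N ->
    (57 * \sum_(1 <= i < k.+1) m i <= 77 * T * m k)%N.
  exact: (main J.+1 J.+1).
elim => [|K IH] k kK kJ.
  by move: kK; rewrite leqn0 => /eqP ->; rewrite big_geq.
case: (leqP k T) => hkT.
  have h := @sum_le_const m 1 k.+1 (m k) (fun i hi => mono i k ltac:(lia)).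
  have h' := leq_mul hkT (leqnn (m k)).
  nia.
have hsplit := @big_cat_nat nat 0 addn (k - T).+1 1 k.+1 xpredT m ltac:(lia) ltac:(lia).
rewrite hsplit /=.
have h1 := IH (k - T) ltac:(lia) ltac:(lia).
have h2 := @sum_le_const m (k - T).+1 k.+1 (m k) (fun i hi => mono i k ltac:(lia)).
have h3 := grow (k - T) ltac:(lia) ltac:(lia).
have e : (k - T + T = k)%N by lia.
rewrite e in h3.
have h4 := leq_mul (leqnn T) h3.
have e2 : (k.+1 - (k - T).+1 = T)%N by lia.
rewrite e2 in h2.
nia.
Qed.


Local Open Scope classical_set_scope.
Local Open Scope ring_scope.

Lemma eqle (R : numDomainType) (x y : R) : x = y -> x <= y.
Proof. by move=> ->. Qed.

Lemma step_real (R : realType) (d0 d1 p M : R) : 0 < d0 -> 0 <= d1 -> 0 < p -> p <= M ->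
  M ^+ 2 <= 15 * p ^+ 2 -> 4 * Num.sqrt (d1 / (d0 + d1)) * p <= M ->
  15 * p ^+ 4 * d1 <= M ^+ 4 * d0.
Proof.
move=> d0p d1p pp pM M15 h.
have dp : 0 < d0 + d1 by lra.
set Q := d1 / (d0 + d1) in h.
have Q0 : 0 <= Q by rewrite divr_ge0 //; lra.
have eQ : Q * (d0 + d1) = d1 by rewrite /Q divfK //; lra.
have s0 := sqrtr_ge0 Q.
have h2 : (4 * Num.sqrt Q * p) ^+ 2 <= M ^+ 2.
  by rewrite ler_pXn2r ?nnegrE //; nra.
have h3 : 16 * Q * p ^+ 2 <= M ^+ 2.
  by move: h2; rewrite !exprMn sqr_sqrtr // => h2; nra.
have h4 : 16 * p ^+ 2 * d1 <= M ^+ 2 * (d0 + d1).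
  by rewrite -eQ; nra.
have h5 : (M ^+ 2 - p ^+ 2) * (M ^+ 2 - 15 * p ^+ 2) * d1 <= 0.
  apply: mulr_le0_ge0 => //; apply: mulr_ge0_le0; first by nra.
  lra.
have e4 : forall x : R, x ^+ 4 = x ^+ 2 * x ^+ 2 by move=> x; rewrite -exprD.
rewrite !e4; nra.
Qed.

Section Main.
Variables (R : realType) (n : nat).
Local Notation vec := 'rV[R]_n.
Variables (f : vec -> \bar R) (fstar : R) (A : vec -> nat -> vec) (nb eps : R) (z0 : vec).
Hypothesis Hfs : forall y, (fstar%:E <= f y)%E.
Hypothesis Hz0 : f z0 \is a fin_num.
Hypothesis Hrate : forall x0 k, (f x0 <= f z0)%E -> (1 <= k)%N ->
  f (A x0 k) \is a fin_num /\
  (k%:R + 1) ^+ 2 * (fr f (A x0 k) - fstar) <= nb ^+ 2 * (fr f x0 - fstar).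
Hypothesis Hnb : 2^-1 <= nb.
Hypothesis Heps : 0 < eps.

Local Notation F := (fr f).
Local Notation X := (Ad_x f A).

Lemma Ez0 : f z0 = (F z0)%:E.
Proof. by rewrite /fr fineK. Qed.

Lemma finE x : (f x <= f z0)%E -> f x = (F x)%:E.
Proof.
move=> hle; have h1 := Hfs x; rewrite Ez0 in hle.
rewrite /fr; case E: (f x) => [r| |] //=; rewrite E in h1 hle => //.
Qed.

Lemma fstar_le x : (f x <= f z0)%E -> fstar <= F x.
Proof. by move=> h; have := Hfs x; rewrite (finE _ h) lee_fin. Qed.

Lemma Ad_x_leS r k : (f (X r k.+1) <= f (X r k))%E.
Proof. by rewrite /=; case: ifP. Qed.

Lemma Ad_x_leA r k : (f (X r k.+1) <= f (A r k.+1))%E.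
Proof. by rewrite /=; case: ifP => // /negbT; rewrite -ltNge => /ltW. Qed.

Lemma Ad_x_mono r i k : (i <= k)%N -> (f (X r k) <= f (X r i))%E.
Proof.
elim: k => [|k IH]; first by rewrite leqn0 => /eqP ->.
rewrite leq_eqVlt => /orP [/eqP -> //| ]; rewrite ltnS => /IH h.
exact: le_trans (Ad_x_leS r k) h.
Qed.

Lemma Ad_x_le0 r k : (f (X r k) <= f r)%E.
Proof. exact: (@Ad_x_mono r 0 k (leq0n k)). Qed.

Lemma Ad_x_gap r k : (f r <= f z0)%E -> (1 <= k)%N ->
  (k%:R + 1) ^+ 2 * (F (X r k) - fstar) <= nb ^+ 2 * (F r - fstar).
Proof.
move=> hr; case: k => [//|k] _.
have [hA1 hA2] := Hrate r k.+1 hr (isT : (1 <= k.+1)%N).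
have hx : (f (X r k.+1) <= f z0)%E := le_trans (Ad_x_le0 r k.+1) hr.
have := Ad_x_leA r k; rewrite (finE _ hx) -(fineK hA1) lee_fin => h.
apply: le_trans hA2; apply: ler_wpM2l; first exact: sqr_ge0.
by rewrite lerD2r.
Qed.


Lemma Ad_x_z0 r k : (f r <= f z0)%E -> (f (X r k) <= f z0)%E.
Proof. by move=> h; exact: le_trans (Ad_x_le0 r k) h. Qed.

Lemma nb_ge0 : 0 <= nb.
Proof. by apply: le_trans Hnb; rewrite invr_ge0. Qed.

Lemma Ad_stop_big r nn k : (f r <= f z0)%E -> 4 * nb <= k%:R -> nn <= k%:R ->
  Ad_stop f A r nn k.
Proof.
move=> hr hk hn; split => //.
have hk2 : (2 <= k)%N.
  rewrite -(ler_nat R); apply: le_trans hk. have := Hnb; lra.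
have hl : (1 <= k./2)%N by case: k hk2 {hk hn} => [|[|k]].
set l := k./2.
have hkl : k%:R <= 2 * l%:R + 1 :> R.
  have e := odd_double_half k.
  have hn2 : (k <= l.*2 + 1)%N by rewrite -{1}e /l addnC leq_add2l; case: (odd k).
  have := hn2; rewrite -(ler_nat R) natrD -muln2 natrM /= => hh.
  apply: le_trans hh _; rewrite mulrC; lra.
have xa := Ad_x_z0 r l hr; have xb := Ad_x_z0 r k hr.
rewrite /= (finE _ xa) (finE _ xb) (finE _ hr) -!EFinB -EFinM lee_fin.
have g := Ad_x_gap r l hr hl.
have fb := fstar_le (X r k) xb.
have fr0 := fstar_le r hr.
have nb0 := nb_ge0.
have h2 : 2 * nb <= l%:R + 1 by lra.
have h3 : 4 * nb ^+ 2 <= (l%:R + 1) ^+ 2.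
  have -> : 4 * nb ^+ 2 = (2 * nb) ^+ 2 by rewrite exprMn; congr (_ * _); rewrite expr2; lra.
  by rewrite ler_pXn2r // ?nnegrE; lra.
have hl0 : 0 < (l%:R + 1) ^+ 2 :> R by apply: exprn_gt0; lra.
have h4 : 4 * (F (X r l) - fstar) <= F r - fstar.
  rewrite -(ler_pM2l hl0).
  apply: (le_trans (_ : _ <= 4 * (nb ^+ 2 * (F r - fstar)))).
    by rewrite mulrCA ler_pM2l //; lra.
  rewrite mulrA; apply: ler_wpM2r; lra.
lra.
Qed.


Lemma nat_ge (x : R) : exists k : nat, x <= k%:R.
Proof.
exists `|Num.ceil x|%N; apply: le_trans (ceil_ge x) _.
by rewrite natr_absz ler_int ler_norm.
Qed.

Definition Ad_P r nn k : bool := `[< (1 <= k)%N /\ Ad_stop f A r nn k >].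

Definition Ad_m r nn : nat :=
  match pselect (exists k, Ad_P r nn k) with
  | left P => ex_minn P
  | right _ => 1%N
  end.

Lemma Ad_ex r nn : (f r <= f z0)%E -> exists k, Ad_P r nn k.
Proof.
move=> hr; have [a ha] := nat_ge (4 * nb); have [b hb] := nat_ge nn.
exists (maxn a b).+1; apply/asboolP; split => //.
apply: Ad_stop_big => //.
  apply: le_trans ha _; rewrite ler_nat; apply: leq_trans (leq_maxl a b) _; exact: leqnSn.
apply: le_trans hb _; rewrite ler_nat; apply: leq_trans (leq_maxr a b) _; exact: leqnSn.
Qed.

Lemma Ad_m_spec r nn : (f r <= f z0)%E ->
  Ad_run f A r nn (X r (Ad_m r nn)) (Ad_m r nn) /\
  (forall k, (1 <= k)%N -> Ad_stop f A r nn k -> (Ad_m r nn <= k)%N).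
Proof.
move=> hr; rewrite /Ad_m; case: pselect => [P|nP]; last by exfalso; apply: nP; exact: Ad_ex.
case: ex_minnP => m /asboolP [m1 sm] minm; split.
  split => // k /andP [k1 km] sk.
  have pk : Ad_P r nn k by apply/asboolP.
  by have := minm k pk; rewrite leqNgt km.
move=> k k1 sk; apply: minm; exact/asboolP.
Qed.

Lemma Ad_m_le r nn k : (f r <= f z0)%E -> 4 * nb <= k%:R -> nn <= k%:R ->
  (Ad_m r nn <= k)%N.
Proof.
move=> hr hk hn; have [_ h] := Ad_m_spec r nn hr; apply: h.
  by rewrite -(ler_nat R); apply: le_trans hk; have := Hnb; lra.
exact: Ad_stop_big.
Qed.

Definition step (j : nat) (ZM : (nat -> vec) * (nat -> nat)) :=
  let Z := ZM.1 in let M := ZM.2 in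
  let m := Ad_m (Z j) (n_coef f Z M j) in
  (fun i => if i == j.+1 then X (Z j) m else Z i,
   fun i => if i == j.+1 then m else M i).

Fixpoint seqs (j : nat) : (nat -> vec) * (nat -> nat) :=
  if j is j'.+1 then step j' (seqs j') else (fun _ => z0, fun _ => 1%N).

Definition zs j := (seqs j).1 j.
Definition ms j := (seqs j).2 j.

Lemma seqs_stable j i : (i <= j)%N -> (seqs j).1 i = zs i /\ (seqs j).2 i = ms i.
Proof.
elim: j i => [|j IH] i; first by rewrite leqn0 => /eqP ->.
rewrite leq_eqVlt => /orP [/eqP ->|]; first by [].
rewrite ltnS => hij; have [h1 h2] := IH i hij.
by rewrite /= /step /= (ltn_eqF (leq_ltn_trans hij (ltnSn j))) h1 h2.
Qed.

Lemma n_coef_ext (Z Z' : nat -> vec) (M M' : nat -> nat) j :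
  (forall i, (i <= j)%N -> Z i = Z' i) -> (forall i, (i <= j)%N -> M i = M' i) ->
  n_coef f Z M j = n_coef f Z' M' j.
Proof.
move=> hZ hM; rewrite /n_coef /s_coef /m_prev hM //.
have h1 : (j.-1 <= j)%N by exact: leq_pred.
have h2 : (j.-2 <= j)%N by apply: leq_trans (leq_pred _) h1.
rewrite (hZ j) // (hZ j.-1) // (hZ j.-2) //.
by case: j hM {hZ h1 h2} => [|j] hM //; rewrite hM.
Qed.

Lemma ms_succ j : ms j.+1 = Ad_m (zs j) (n_coef f zs ms j).
Proof.
rewrite /ms /= /step /= eqxx.
have [h1 _] := @seqs_stable j j (leqnn j); rewrite h1; congr Ad_m.
apply: n_coef_ext => i hi; have [a b] := @seqs_stable j i hi; by rewrite ?a ?b.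
Qed.

Lemma zs_succ j : zs j.+1 = X (zs j) (ms j.+1).
Proof.
rewrite ms_succ /zs /= /step /= eqxx.
have [h1 _] := @seqs_stable j j (leqnn j); rewrite h1; congr (X _ (Ad_m _ _)).
apply: n_coef_ext => i hi; have [a b] := @seqs_stable j i hi; by rewrite ?a ?b.
Qed.

Lemma zs0 : zs 0 = z0. Proof. by []. Qed.
Lemma ms0 : ms 0 = 1%N. Proof. by []. Qed.

Lemma zs_le j : (f (zs j) <= f z0)%E.
Proof.
elim: j => [|j IH]; first by rewrite zs0.
rewrite zs_succ; exact: Ad_x_z0.
Qed.

Lemma zs_run j : Ad_run f A (zs j) (n_coef f zs ms j) (zs j.+1) (ms j.+1).
Proof.
have [h _] := Ad_m_spec (zs j) (n_coef f zs ms j) (zs_le j).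
by rewrite zs_succ ms_succ.
Qed.

Lemma ms_pos j : (1 <= ms j)%N.
Proof. by case: j => [|j] //; have [] := zs_run j. Qed.

Lemma n_coef_le j : n_coef f zs ms j <= (ms j.+1)%:R.
Proof. by have [_ [] ] := zs_run j. Qed.

Lemma ms_mono j : (ms j <= ms j.+1)%N.
Proof.
rewrite -(ler_nat R); apply: le_trans (n_coef_le j).
by rewrite /n_coef le_max lexx.
Qed.


Lemma zs_fin j : f (zs j) = (F (zs j))%:E.
Proof. exact: finE (zs_le j). Qed.

Lemma zs_dec j : F (zs j.+1) <= F (zs j).
Proof.
have := Ad_x_le0 (zs j) (ms j.+1); rewrite -zs_succ.
by rewrite (zs_fin j.+1) (zs_fin j) lee_fin.
Qed.

Lemma zs_fstar j : fstar <= F (zs j).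
Proof. exact: fstar_le (zs_le j). Qed.

Lemma q_bound (a1 b1 c1 m2 nb2 : R) : 0 <= c1 -> c1 <= a1 -> a1 <= b1 ->
  0 <= m2 -> 0 <= nb2 -> m2 * a1 <= nb2 * b1 ->
  m2 * ((a1 - c1) / (b1 - c1)) <= nb2.
Proof.
move=> c0 ca ab m0 n0 h.
have [e|ne] := eqVneq (b1 - c1) 0; first by rewrite e invr0 mulr0 mulr0.
have bp : 0 < b1 - c1 by rewrite lt_neqAle eq_sym ne /=; lra.
rewrite mulrA ler_pdivrMr //.
have [hm|hm] := leP nb2 m2; nra.
Qed.

Lemma s_bound j : (2 <= j)%N -> 4 * s_coef f zs j * (m_prev ms j)%:R <= 4 * nb.
Proof.
case: j => [|[|j]] // _.
rewrite /s_coef /= /m_prev.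
set m := ms j.+1.
have m1 : (1 <= m)%N := ms_pos j.+1.
have g := Ad_x_gap (zs j) m (zs_le j) m1.
rewrite -zs_succ in g.
have d1 := zs_dec j; have d2 := zs_dec j.+1; have f2 := zs_fstar j.+2.
have nb0 := nb_ge0.
have q := @q_bound (F (zs j.+1) - fstar) (F (zs j) - fstar) (F (zs j.+2) - fstar)
  ((m%:R + 1) ^+ 2) (nb ^+ 2) ltac:(lra) ltac:(lra) ltac:(lra) (sqr_ge0 _) (sqr_ge0 _) g.
have e1 : F (zs j.+1) - fstar - (F (zs j.+2) - fstar) = F (zs j.+1) - F (zs j.+2) by ring.
have e2 : F (zs j) - fstar - (F (zs j.+2) - fstar) = F (zs j) - F (zs j.+2) by ring.
rewrite e1 e2 in q.
set Q := (F (zs j.+1) - F (zs j.+2)) / (F (zs j) - F (zs j.+2)) in q *.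
have s0 : 0 <= Num.sqrt Q := sqrtr_ge0 Q.
have hs : (m%:R + 1) * Num.sqrt Q <= nb.
  have m0 : 0 <= m%:R + 1 :> R by rewrite addr_ge0 ?ler0n.
  rewrite -(ger0_norm m0) -sqrtr_sqr -sqrtrM ?sqr_ge0 //.
  by rewrite -(ger0_norm nb0) -sqrtr_sqr ler_sqrt ?sqr_ge0.
have : 0 <= m%:R :> R by rewrite ler0n.
nra.
Qed.

Lemma ms_le_K (K : nat) : 4 * nb <= K%:R -> forall j, (ms j <= K)%N.
Proof.
move=> hK; have K1 : (1 <= K)%N by rewrite -(ler_nat R); apply: le_trans hK; have := Hnb; lra.
elim => [|j IH]; first by rewrite ms0.
rewrite ms_succ; apply: Ad_m_le => //; first exact: zs_le.
rewrite /n_coef ge_max; apply/andP; split; first by rewrite ler_nat.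
case: (leqP 2 j) => hj; first by apply: le_trans (s_bound j hj) hK.
rewrite /s_coef leqNgt hj /= mulr0 mul0r; exact: ler0n.
Qed.

Definition Dl j := F (zs j) - F (zs j.+1).
Definition w i := Dl i / (((ms i.+2)%:R * (ms i.+1)%:R) ^+ 4).

Lemma Dl_ge0 j : 0 <= Dl j.
Proof. by rewrite /Dl subr_ge0 zs_dec. Qed.

Lemma zs_le0 j : F (zs j) <= F z0.
Proof. by have := zs_le j; rewrite (zs_fin j) Ez0 lee_fin. Qed.

Lemma Dl_leD j : Dl j <= F z0 - fstar.
Proof. by rewrite /Dl; have := zs_le0 j; have := zs_fstar j.+1; lra. Qed.

Lemma ms_gt0R j : 0 < (ms j)%:R :> R.
Proof. by rewrite ltr0n; exact: ms_pos. Qed.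

Lemma ms_monoN i k : (i <= k)%N -> (ms i <= ms k)%N.
Proof.
elim: k => [|k IH]; first by rewrite leqn0 => /eqP ->.
rewrite leq_eqVlt => /orP [/eqP -> //|]; rewrite ltnS => /IH h.
exact: leq_trans h (ms_mono k).
Qed.

Lemma step_w i : 0 < Dl i -> (ms i.+3)%:R ^+ 2 <= 15 * (ms i.+1)%:R ^+ 2 :> R ->
  15 * w i.+1 <= w i.
Proof.
move=> d0 hM.
have hn := n_coef_le i.+2.
have hs : 4 * Num.sqrt (Dl i.+1 / (Dl i + Dl i.+1)) * (ms i.+1)%:R <= (ms i.+3)%:R.
  apply: le_trans hn; rewrite /n_coef le_max; apply/orP; right.
  rewrite /m_prev /s_coef /= /Dl.
  have -> : F (zs i) - F (zs i.+1) + (F (zs i.+1) - F (zs i.+2)) = F (zs i) - F (zs i.+2) by ring.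
  by [].
have pM : (ms i.+1)%:R <= (ms i.+3)%:R :> R by rewrite ler_nat; apply: ms_monoN; rewrite ltnW.
have st := @step_real R _ _ _ _ d0 (Dl_ge0 i.+1) (ms_gt0R i.+1) pM hM hs.
rewrite /w.
set a := (ms i.+3)%:R; set b := (ms i.+2)%:R; set c := (ms i.+1)%:R.
have a0 : 0 < a := ms_gt0R _. have b0 : 0 < b := ms_gt0R _. have c0 : 0 < c := ms_gt0R _.
rewrite mulrA ler_pdivrMr; last by apply: exprn_gt0; apply: mulr_gt0.
rewrite mulrAC ler_pdivlMr; last by apply: exprn_gt0; apply: mulr_gt0.
rewrite !exprMn.
have b4 : 0 <= b ^+ 4 by apply: exprn_ge0; lra.
have := ler_wpM2r b4 st.
move=> h; rewrite -/a -/c in h.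
have e1 : 15 * Dl i.+1 * (b ^+ 4 * c ^+ 4) = 15 * c ^+ 4 * Dl i.+1 * b ^+ 4 by ring.
have e2 : Dl i * (a ^+ 4 * b ^+ 4) = a ^+ 4 * Dl i * b ^+ 4 by ring.
by rewrite e1 e2.
Qed.

Lemma window i l : (forall t, (t < l)%N -> 0 < Dl (i + t) /\    (ms (i + t).+3)%:R ^+ 2 <= 15 * (ms (i + t).+1)%:R ^+ 2 :> R) ->
  15 ^+ l * w (i + l) <= w i.
Proof.
elim: l => [|l IH] h; first by rewrite expr0 mul1r addn0.
have [h1 h2] := h l (ltnSn l).
have st := step_w _ h1 h2.
apply: le_trans (IH (fun t ht => h t (ltnW ht))).
rewrite exprSr -mulrA addnS; apply: ler_wpM2l; first by apply: exprn_ge0.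
exact: st.
Qed.

Lemma term_ex : exists j, Dl j <= eps.
Proof.
apply: contrapT => hne.
have hall : forall j, eps < Dl j.
  by move=> j; rewrite ltNge; apply/negP => h; apply: hne; exists j.
have cum : forall k, k%:R * eps <= F z0 - F (zs k).
  elim => [|k IH]; first by rewrite mul0r zs0 subrr.
  have := hall k; rewrite /Dl -natr1 mulrDl mul1r; lra.
have [k hk] := nat_ge ((F z0 - fstar) / eps).
have := cum k.+1; have := zs_fstar k.+1.
have : F z0 - fstar <= k%:R * eps by rewrite -ler_pdivrMr.
rewrite -natr1 mulrDl mul1r => a b c; have := Heps; lra.
Qed.

Lemma growth (J T : nat) : (2 <= T)%N -> (forall j, (j < J)%N -> eps < Dl j) ->
  15 ^+ 4 * (eps + (F z0 - fstar)) <= 15 ^+ T.-1 * eps ->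
  forall i, (1 <= i)%N -> (i + T <= J.+1)%N ->
  15 * (ms i)%:R ^+ 2 <= (ms (i + T))%:R ^+ 2 :> R.
Proof.
move=> T2 hD HT i i1 iT; rewrite leNgt; apply/negP => hlt.
case: i i1 iT hlt => [//|i] _ iT hlt.
set X := (ms i.+1)%:R : R in hlt; set Y := (ms (i.+1 + T))%:R : R in hlt.
have X0 : 0 < X := ms_gt0R _.
have Y0 : 0 < Y := ms_gt0R _.
have sqle : forall a b, (a <= b)%N -> (ms a)%:R ^+ 2 <= (ms b)%:R ^+ 2 :> R.
  move=> a b ab; rewrite ler_pXn2r ?nnegrE ?ler0n // ler_nat; exact: ms_monoN.
have hW : forall t, (t < T.-1)%N -> 0 < Dl (i + t) /\
    (ms (i + t).+3)%:R ^+ 2 <= 15 * (ms (i + t).+1)%:R ^+ 2 :> R.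
  move=> t ht; split.
    have hj : (i + t < J)%N by rewrite -ltnS; apply: leq_trans iT; rewrite addSn ltnS; lia.
    exact: lt_trans Heps (hD _ hj).
  have a1 : ((i + t).+3 <= i.+1 + T)%N by rewrite -addn3 addSn -addSn; lia.
  have a2 : (i.+1 <= (i + t).+1)%N by rewrite ltnS leq_addr.
  apply: le_trans (sqle _ _ a1) _; apply: le_trans (ltW hlt) _.
  by apply: ler_wpM2l; [lra| exact: sqle].
have W := @window i T.-1 hW.
rewrite /w in W.
have e1 : ((i + T.-1).+2 = i.+1 + T)%N by move: T2; clear; lia.
rewrite e1 -/Y in W.
set Z := (ms (i + T.-1).+1)%:R : R in W.
set P1 := ((ms i.+2)%:R * X) ^+ 4 in W.
have Z0 : 0 < Z := ms_gt0R _.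
have ZY : Z <= Y by rewrite ler_nat; apply: ms_monoN; move: T2; clear; lia.
have X2 : (ms i.+2)%:R >= X by rewrite ler_nat; apply: ms_monoN.
have P1g : (X * X) ^+ 4 <= P1 by rewrite ler_pXn2r // ?nnegrE; nra.
have P10 : 0 < P1 by apply: lt_le_trans P1g; apply: exprn_gt0; nra.
have P20 : 0 < (Y * Z) ^+ 4 by apply: exprn_gt0; nra.
have P2g : (Y * Z) ^+ 4 <= (Y * Y) ^+ 4 by rewrite ler_pXn2r // ?nnegrE; nra.
move: W; rewrite mulrA ler_pdivrMr // mulrAC ler_pdivlMr // => W.
have hj : (i + T.-1 < J)%N by move: iT T2; clear; lia.
have d1 : eps < Dl (i + T.-1) := hD _ hj.
have d2 := Dl_leD i.
have d0 := Dl_ge0 i.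
set D := F z0 - fstar in HT d2.
set Q := (15 : R) ^+ T.-1 in HT W.
have Q0 : 0 < Q by apply: exprn_gt0.
set L := Dl (i + T.-1) in W d1; set M := Dl i in W d2 d0.
have h1 : Q * eps * (X * X) ^+ 4 <= Q * L * P1.
  rewrite -!mulrA ler_pM2l //; apply: ler_pM; [exact: ltW Heps | apply: exprn_ge0; nra | exact: ltW d1 | exact: P1g].
have h2 : M * (Y * Z) ^+ 4 <= D * (Y * Y) ^+ 4.
  by apply: ler_pM => //; apply: exprn_ge0; nra.
have hY : (Y * Y) ^+ 4 <= 15 ^+ 4 * (X * X) ^+ 4.
  rewrite -exprMn ler_pXn2r // ?nnegrE; nra.
have D0 : 0 <= D by lra.
have h3 : Q * eps * (X * X) ^+ 4 <= 15 ^+ 4 * D * (X * X) ^+ 4.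
  apply: le_trans h1 _; apply: le_trans W _; apply: le_trans h2 _.
  apply: le_trans (ler_wpM2l D0 hY) _; apply: eqle; ring.
have X8 : 0 < (X * X) ^+ 4 by apply: exprn_gt0; nra.
rewrite ler_pM2r // in h3.
have : (0 : R) < 15 ^+ 4 * eps by apply: mulr_gt0; [apply: exprn_gt0 | exact: Heps].
move: HT h3; rewrite mulrDr; lra.
Qed.

Lemma main_section (K T : nat) : 4 * nb <= K%:R -> (5 <= T)%N ->
  15 ^+ 4 * (eps + (F z0 - fstar)) <= 15 ^+ T.-1 * eps ->
  exists jout (zs' : nat -> vec) (ms' : nat -> nat),
    Astar_run f A eps z0 jout zs' ms' /\
    (forall j, (j <= jout)%N -> (ms' j.+1 <= K)%N) /\
    (57 * \sum_(0 <= j < jout.+1) ms' j.+1 <= 77 * T * K)%N.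
Proof.
move=> hK hT HT.
have [j0 hj0] := term_ex.
have exP : exists j, Dl j <= eps by exists j0.
case: (ex_minnP exP) => J hJ minJ.
have fE : forall j, (f (zs j) - f (zs j.+1) <= eps%:E)%E = (Dl j <= eps).
  by move=> j; rewrite !zs_fin -EFinB lee_fin.
exists J, zs, ms; split; [|split].
- split => //.
  + by move=> j _; exact: zs_run.
  + move=> j hj; rewrite fE => h; have := minJ j h; rewrite leqNgt hj //.
  + by rewrite fE.
- by move=> j _; exact: ms_le_K.
- have hD : forall j, (j < J)%N -> eps < Dl j.
    move=> j hj; rewrite ltNge; apply/negP => h; have := minJ j h; rewrite leqNgt hj //.
  have gr : forall i, (1 <= i)%N -> (i + T <= J.+1)%N -> (77 * ms i <= 20 * ms (i + T))%N.
    move=> i i1 iT.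
    have g := @growth J T ltac:(by apply: leq_trans hT) hD HT i i1 iT.
    have X0 : 0 <= (ms i)%:R :> R by rewrite ler0n.
    have Y0 : 0 <= (ms (i + T))%:R :> R by rewrite ler0n.
    have h2 : (77 * (ms i)%:R) ^+ 2 <= (20 * (ms (i + T))%:R) ^+ 2 :> R.
      rewrite !exprMn; nra.
    rewrite ler_pXn2r // ?nnegrE in h2; try nra.
    by rewrite -(ler_nat R) !natrM.
  have sb := @sum_bound ms J T ltac:(by apply: leq_trans hT) (fun i k h => ms_monoN i k h) gr.
  have -> : (\sum_(0 <= j < J.+1) ms j.+1 = \sum_(1 <= i < J.+2) ms i)%N by rewrite big_add1.
  apply: leq_trans sb _; rewrite leq_mul2l; apply/orP; right; exact: ms_le_K.
Qed.

End Main.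

Lemma fin_ineq (R : realFieldType) (S P E : R) :
  57 * S <= 77 * P -> 154 / 57 * P <= E -> S <= E / 2.
Proof. lra. Qed.

Lemma expR1_ge (R : realType) : (154 / 57 : R) <= expR 1.
Proof.
have H := @nondecreasing_cvgn_le R (series (exp_coeff 1)).
have nd : nondecreasing_seq (series (exp_coeff (1:R))).
  apply: nondecreasing_series => k _ _.
  by rewrite /exp_coeff /= expr1n mul1r invr_ge0 ler0n.
have := H nd (is_cvg_series_exp_coeff 1) 5%N.
rewrite /expR => h; apply: le_trans h.
rewrite /series /= /exp_coeff /=.
rewrite !big_nat_recr //= big_nil !expr1n !mul1r.
rewrite /factorial /=.
lra.
Qed.

Theorem theorem1 (R : realType) (n : nat)
  (N : 'rV[R]_n -> R) (f : 'rV[R]_n -> \bar R) (fstar : R)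
  (xbar : 'rV[R]_n -> 'rV[R]_n) (A : 'rV[R]_n -> nat -> 'rV[R]_n)
  (mu : R -> R) (af Lf : R) (g : 'rV[R]_n -> 'rV[R]_n)
  (rho eps : R) (z0 : 'rV[R]_n) :
  (* the norm *)
  is_norm N ->
  (* f proper closed convex, and min f = fstar is attained *)
  proper_fun f -> closed_fun f -> convex_fun f ->
  (exists x, f x = fstar%:E) -> (forall y, (fstar%:E <= f y)%E) ->
  (* xbar x is a nearest point of Omega_f = {f = f*} to x *)
  (forall x, f (xbar x) = fstar%:E /\
     forall z, f z = fstar%:E -> N (x - xbar x) <= N (x - z)) ->
  (* A(x0,0) = x0 *)
  (forall x0, A x0 0%N = x0) ->
  (* Assumption (A)(i) *)
  (forall r, 0 < r -> 0 < mu r /\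
     forall x0, (f x0 - fstar%:E <= r%:E)%E ->
       ((mu r / 2 * N (x0 - xbar x0) ^+ 2)%:E <= f x0 - fstar%:E)%E) ->
  (* Assumption (A)(ii) *)
  0 < af -> 0 < Lf ->
  (forall x, g x = 0 <-> f x = fstar%:E) ->
  (forall x0, x0 \in dom f ->
     (f (A x0 1%N) <= f x0 - ((2 * Lf)^-1 * dual_norm N (g x0) ^+ 2)%:E)%E /\
     (forall k, (1 <= k)%N ->
        (f (A x0 k) - fstar%:E
           <= (af / (k%:R + 1) ^+ 2 * N (x0 - xbar x0) ^+ 2)%:E)%E)) ->
  (* data of the theorem *)
  0 < rho -> (f z0 - fstar%:E <= rho%:E)%E -> 0 < eps ->
  (* Assumption (A)(iii): nbar_rho *)
  let nbar := Num.max (2^-1) (Num.sqrt (2 * af / mu rho)) in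
  let c := ((Num.ceil (4 * nbar))%:~R : R) in
  (* (i) A_* terminates (finite j_out) *)
  exists (jout : nat) (zs : nat -> 'rV[R]_n) (ms : nat -> nat),
    Astar_run f A eps z0 jout zs ms /\
    (* (ii) m_{j+1} <= ceil(4 nbar) for j = 0..j_out *)
    (forall j, (j <= jout)%N -> (ms j.+1)%:R <= c) /\
    (* (iii) total number of iterations of A *)
    (\sum_(0 <= j < jout.+1) ms j.+1)%N%:R
      <= expR 1 * c / 2 *
         (Num.ceil (5 + ln (1 + (fr f z0 - fstar) / eps) / ln 15))%:~R.
Proof.
move=> _ _ _ _ _ Hfs _ _ HAi af0 _ _ HAii rho0 Hz0 eps0 nbar c.
have z0fin : f z0 \is a fin_num.
  by move: Hz0 (Hfs z0); case: (f z0) => [r| |].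
have Ez0 : f z0 = (fr f z0)%:E by rewrite /fr fineK.
have [mu0 hmu] := HAi rho rho0.
have nbh : 2^-1 <= nbar by rewrite /nbar le_max lexx.
have nb0 : 0 <= nbar by apply: le_trans nbh; rewrite invr_ge0.
have nb2 : 2 * af / mu rho <= nbar ^+ 2.
  have q0 : 0 <= 2 * af / mu rho by apply: divr_ge0; [lra | exact: ltW].
  have hs : Num.sqrt (2 * af / mu rho) <= nbar by rewrite /nbar le_max lexx orbT.
  rewrite -(sqr_sqrtr q0) ler_pXn2r // ?nnegrE //; exact: sqrtr_ge0.
have Hrate : forall x0 k, (f x0 <= f z0)%E -> (1 <= k)%N ->
    f (A x0 k) \is a fin_num /\
    (k%:R + 1) ^+ 2 * (fr f (A x0 k) - fstar) <= nbar ^+ 2 * (fr f x0 - fstar).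
  move=> x0 k hx k1.
  have Ex0 := @finE R n f fstar z0 Hfs z0fin x0 hx.
  have hdom : x0 \in dom f by rewrite in_setE /dom /= Ex0 ltry.
  have [_ h2] := HAii x0 hdom.
  have hA := h2 k k1.
  have Afin : f (A x0 k) \is a fin_num.
    by move: hA (Hfs (A x0 k)); case: (f (A x0 k)) => [r| |].
  split => //.
  rewrite -(fineK Afin) -EFinB lee_fin in hA.
  have hx0' : (f x0 - fstar%:E <= rho%:E)%E.
    apply: le_trans Hz0; rewrite Ex0 Ez0 -!EFinB lee_fin lerD2r.
    by rewrite -lee_fin -Ex0 -Ez0.
  have hm := hmu x0 hx0'; rewrite Ex0 -EFinB lee_fin in hm.
  set Nd := N (x0 - xbar x0) ^+ 2 in hA hm.
  set G := fr f x0 - fstar in hm *.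
  set FA := fine (f (A x0 k)) in hA.
  have Nd0 : 0 <= Nd by apply: sqr_ge0.
  have kp : 0 < (k%:R + 1) ^+ 2 :> R by apply: exprn_gt0; rewrite ltr_pwDr // ler0n.
  have hA' : (k%:R + 1) ^+ 2 * (FA - fstar) <= af * Nd.
    have e : af * Nd = (k%:R + 1) ^+ 2 * (af / (k%:R + 1) ^+ 2 * Nd).
      by field; rewrite gt_eqF.
    by rewrite e ler_pM2l.
  apply: le_trans hA' _.
  have h1 : mu rho * Nd <= 2 * G.
    have e : mu rho * Nd = 2 * (mu rho / 2 * Nd) by field.
    by rewrite e; lra.
  have h3 : 2 * af <= nbar ^+ 2 * mu rho.
    by rewrite -ler_pdivrMr.
  have G0 : 0 <= G by apply: le_trans hm; apply: mulr_ge0 => //; apply: divr_ge0; lra.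
  rewrite -(ler_pM2l mu0).
  have h4 : mu rho * (af * Nd) <= af * (2 * G) by rewrite mulrCA; apply: ler_wpM2l; lra.
  apply: le_trans h4 _.
  have h5 := ler_wpM2r G0 h3.
  have ea : af * (2 * G) = 2 * af * G by ring.
  have eb : mu rho * (nbar ^+ 2 * G) = nbar ^+ 2 * mu rho * G by ring.
  by rewrite ea eb.
have c0 : (0 <= Num.ceil (4 * nbar))%R by rewrite ceil_ge0; lra.
set K := `|Num.ceil (4 * nbar)|%N.
have cK : c = K%:R by rewrite /c /K natr_absz ger0_norm.
have hK : 4 * nbar <= K%:R by rewrite -cK /c; exact: ceil_ge.
set D := fr f z0 - fstar.
have D0 : 0 <= D by rewrite /D; have := Hfs z0; rewrite Ez0 lee_fin; lra.
have q1 : 1 <= 1 + D / eps by rewrite lerDl; apply: divr_ge0 => //; lra.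
have ln15 : 0 < ln (15 : R) by apply: ln_gt0; lra.
set L := ln (1 + D / eps) / ln 15.
have L0 : 0 <= L by apply: divr_ge0; [exact: ln_ge0 | exact: ltW].
set Ti := Num.ceil (5 + L).
have Ti5 : (5 <= Ti)%R.
  have := ceil_ge (5 + L); rewrite -/Ti => h.
  have : (4 : int) < Ti by rewrite -(ltr_int R); lra.
  by [].
set T := `|Ti|%N.
have TE : T%:R = Ti%:~R :> R by rewrite /T natr_absz ger0_norm //; apply: le_trans Ti5.
have T5 : (5 <= T)%N by rewrite -(ler_nat R) TE; rewrite -(ler_int R) in Ti5; exact: Ti5.
have LT : L <= (T - 5)%N%:R.
  rewrite natrB // TE; have := ceil_ge (5 + L); rewrite -/Ti; lra.
have HT : 15 ^+ 4 * (eps + (fr f z0 - fstar)) <= 15 ^+ T.-1 * eps.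
  have eT : T.-1 = (4 + (T - 5))%N by move: T5; clear; lia.
  rewrite eT exprD -mulrA ler_pM2l; last by apply: exprn_gt0.
  have h : 1 + D / eps <= 15 ^+ (T - 5).
    have p15 : (15 : R) \in Num.pos by rewrite posrE; lra.
    rewrite -(lnK p15) -expRM_natl.
    have p1 : 1 + D / eps \in Num.pos by rewrite posrE; lra.
    rewrite -[X in X <= _](lnK p1) ler_expR.
    by rewrite -ler_pdivrMr.
  have := ler_wpM2r (ltW eps0) h.
  by rewrite mulrDl mul1r divfK ?gt_eqF // -/D.
have [jout [zs [ms [Hrun [Hii Hsum]]]]] :=
  @main_section R n f fstar A nbar eps z0 Hfs z0fin Hrate nbh eps0 K T hK T5 HT.
exists jout, zs, ms; split => //; split.
  by move=> j hj; rewrite cK ler_nat; exact: Hii.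
have e1 := expR1_ge R.
move: Hsum; rewrite -(ler_nat R) !natrM -cK TE => hs.
set S := (\sum_(0 <= j < jout.+1) ms j.+1)%N%:R in hs *.
have Tc : 0 <= c * Ti%:~R.
  rewrite cK -TE; apply: mulr_ge0; exact: ler0n.
have := ler_wpM2r Tc e1 => h.
have eg : expR 1 * c / 2 * Ti%:~R = (expR 1 * (c * Ti%:~R)) / 2 by field.
rewrite eg.
have eh : 77%:R * Ti%:~R * c = 77%:R * (c * Ti%:~R) :> R by ring.
rewrite eh in hs.
move: hs h; set P := c * Ti%:~R; set E := expR 1 * P.
exact: fin_ineq.
Qed.
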